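(* Let $n\geq 4$ and $l=2^{n-2}-1$. Let $\Lambda$ be an $\mathcal{O}$-order with split semisimple $K$-span whose decomposition matrix is $D_0$; let $V_1,\dots,V_{6+l}$ be the simple $K\otimes\Lambda$-modules indexed according to the rows of $D_0$, and $P_1,P_2,P_3$ the projective indecomposable $\Lambda$-modules indexed according to the columns of $D_0$. Let $\varphi$ be an isometry of $K_0(K\otimes\Lambda)$ mapping the lattice $L=\langle [K\otimes P]\mid P \text{ a projective }\Lambda\text{-module}\rangle_{\mathbb Z}$ onto itself. Then $\varphi$ is a signed permutation of $\{[V_1],\dots,[V_{6+l}]\}$ lying in $$\langle \pm\mathrm{id},\ (2,3)(5,6),\ (-1,-4)(2,3)(-5)(-6),\ (2,4)(-1,-3)(-6)\rangle\cdot\mathrm{Sym}(\{7,\dots,6+l\}).$$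
   Context: $\mathcal{O}$ is a complete discrete valuation ring of characteristic $0$ with fraction field $K$ and algebraically closed residue field $k$ of characteristic $2$. $D_0$ is the $(6+l)\times3$ matrix with rows, in order, $(1,0,0),(0,1,0),(0,0,1),(1,1,1),(1,1,0),(1,0,1)$ followed by $l$ rows $(0,1,1)$; ''decomposition matrix $D_0$'' means the multiplicity of the $j$-th simple $k\otimes\Lambda$-module in the reduction of a full lattice in $V_i$ is $(D_0)_{ij}$, equivalently $[K\otimes P_j]=\sum_i (D_0)_{ij}[V_i]$. $K_0(K\otimes\Lambda)$ is the Grothendieck group, with the bilinear form for which $[V_1],\dots,[V_{6+l}]$ is an orthonormal basis. Signed permutation notation: a signed cycle $(i_1,\dots,i_k)$ with $i_j\in\pm\{1,\dots,6+l\}$ sends $[V_{|i_j|}]$ to $\operatorname{sgn}(i_{j+1})[V_{|i_{j+1}|}]$ (indices mod $k$), and fixes all $[V_m]$ with $m$ not occurring; e.g. $(-5)$ sends $[V_5]\mapsto-[V_5]$. $\mathrm{Sym}(\{7,\dots,6+l\})$ acts by permuting $[V_7],\dots,[V_{6+l}]$ without signs. *)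

(* Defs.v *)
From HB Require Import structures.
From mathcomp Require Import all_boot all_order all_algebra all_fingroup.
Set Implicit Arguments. Unset Strict Implicit. Unset Printing Implicit Defensive.
Import GRing.Theory.
Local Open Scope ring_scope.

(* Indices are 0-based: [V_i] is the basis vector e_(i-1) of Z^(l+6),
   i.e. K_0(K ⊗ Λ) = Z^(l+6) with the standard (orthonormal) form.
   Column-vector convention: the Z-linear map phi is v |-> M *m v. *)

Definition d0 (i j : nat) : int :=
  match i, j with
  | 0, 0 => 1 | 0, _ => 0
  | 1, 1 => 1 | 1, _ => 0
  | 2, 2 => 1 | 2, _ => 0
  | 3, _ => 1
  | 4, 2 => 0 | 4, _ => 1
  | 5, 1 => 0 | 5, _ => 1
  | _, 0 => 0 | _, _ => 1
  end.

Definition D0 (l : nat) : 'M[int]_(6 + l, 3) := \matrix_(i, j) d0 i j.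

(* v lies in L = Z-span of the [K ⊗ P_j] = columns of D0 *)
Definition inL (l : nat) (v : 'cV[int]_(6 + l)) : Prop :=
  exists c : 'cV[int]_3, v = D0 l *m c.

Definition maps_L_onto_L (l : nat) (M : 'M[int]_(6 + l)) : Prop :=
  (forall v, inL v -> inL (M *m v)) /\ (forall w, inL w -> exists v, inL v /\ M *m v = w).

Definition spmx (l : nat) (f : nat -> nat) (s : nat -> int) : 'M[int]_(6 + l) :=
  \matrix_(i, j) (if (i : nat) == f j then s j else 0).

Definition g1 (l : nat) : 'M[int]_(6 + l) :=
  spmx l (fun j => match j with 1 => 2 | 2 => 1 | 4 => 5 | 5 => 4 | k => k end)%N
         (fun _ => 1).
Definition g2 (l : nat) : 'M[int]_(6 + l) :=
  spmx l (fun j => match j with 0 => 3 | 3 => 0 | 1 => 2 | 2 => 1 | k => k end)%N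
         (fun j => match j with 0 | 3 | 4 | 5 => -1 | _ => 1 end).
Definition g3 (l : nat) : 'M[int]_(6 + l) :=
  spmx l (fun j => match j with 1 => 3 | 3 => 1 | 0 => 2 | 2 => 0 | k => k end)%N
         (fun j => match j with 0 | 2 | 5 => -1 | _ => 1 end).

Definition is_generator (l : nat) (g : 'M[int]_(6 + l)) : Prop :=
  g = - 1%:M \/ g = g1 l \/ g = g2 l \/ g = g3 l.

Inductive in_gen_group (l : nat) : 'M[int]_(6 + l) -> Prop :=
| gen_one : in_gen_group 1%:M
| gen_mul : forall g A, is_generator g -> in_gen_group A -> in_gen_group (g *m A)
| gen_mulinv : forall g A, is_generator g -> in_gen_group A ->
    in_gen_group (invmx g *m A).

Definition in_allowed_group (l : nat) (M : 'M[int]_(6 + l)) : Prop :=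
  exists (A : 'M[int]_(6 + l)) (s : 'S_(6 + l)),
    in_gen_group A /\ (forall i : 'I_(6 + l), (i < 6)%N -> s i = i) /\
    M = A *m perm_mx s.

(* Main.v *)
Require Import Defs.
From mathcomp Require Import all_boot all_order all_algebra all_fingroup.
From mathcomp Require Import zify ring lra.
Set Implicit Arguments. Unset Strict Implicit. Unset Printing Implicit Defensive.
Import Order.TTheory GRing.Theory Num.Theory.
Local Open Scope ring_scope.
Arguments d0 (_ _)%_nat_scope.

Lemma spmx_mul l f s g t : (forall j, j < 6 + l -> g j < 6 + l)%N ->
  spmx l f s *m spmx l g t = spmx l (fun j => f (g j)) (fun j => s (g j) * t j).
Proof.
move=> Hg; apply/matrixP=> i j; rewrite !mxE.
rewrite (bigD1 (Ordinal (Hg j (ltn_ord j)))) //= big1 ?addr0.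
  by rewrite !mxE /= eqxx; case: (_ == _); rewrite ?mul0r.
move=> k hk; rewrite !mxE.
have -> : ((k : nat) == g j) = false.
  by apply/negbTE; apply: contra hk => /eqP e; apply/eqP/val_inj.
by rewrite mulr0.
Qed.
Lemma spmx_one l : (1%:M : 'M[int]_(6 + l)) = spmx l id (fun _ => 1).
Proof. by apply/matrixP=> i j; rewrite !mxE /= -val_eqE /=; case: (_ == _). Qed.
Lemma spmx_neg l : (- 1%:M : 'M[int]_(6 + l)) = spmx l id (fun _ => -1).
Proof. by apply/matrixP=> i j; rewrite !mxE /= -val_eqE /=; case: (_ == _). Qed.

Lemma negone l : ((- 1%:M) *m 1%:M : 'M[int]_(6+l)) = spmx l id (fun _ => -1).
Proof. by rewrite mulmx1 spmx_neg. Qed.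
Definition hrf (a0 a1 a2 a3 a4 a5 : nat) : nat -> nat := fun i =>
  match i with 0 => a0 | 1 => a1 | 2 => a2 | 3 => a3 | 4 => a4 | 5 => a5 | i => i end.
Definition erf (t0 t1 t2 t3 t4 t5 t6 : int) : nat -> int := fun i =>
  match i with 0 => t0 | 1 => t1 | 2 => t2 | 3 => t3 | 4 => t4 | 5 => t5 | _ => t6 end.

Lemma crit l (H : nat -> nat) (E : nat -> int) hr er :
  (forall i k : nat, ((i == H k) == (k == hr i)) && ((i == H k) ==> (E k == er i))) ->
  forall i k : 'I_(6 + l), spmx l H E i k = if (k : nat) == hr i then er i else 0.
Proof.
move=> h i k; rewrite mxE; have /andP [/eqP e1 e2] := h i k.
by rewrite -e1; case: ifP e2 => //= _ /eqP.
Qed.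

Lemma genc (i k : nat) (b : bool) : b -> ((i == k) == (k == i)) && ((i == k) ==> b).
Proof. move=> hb; case: (i =P k) => [->|/eqP ne]; first by rewrite !eqxx hb.
have ne2 : (k == i) = false by rewrite eq_sym; exact: negbTE.
by rewrite ne2. Qed.
Ltac side := move=> [|[|[|[|[|[|?]]]]]] ? //=.

Ltac critt := apply: crit; move=> [|[|[|[|[|[|i]]]]]] [|[|[|[|[|[|k]]]]]];
  rewrite /= ?eqxx //=; try (apply: genc; by rewrite ?eqxx).

Definition Ev (a : nat) (t : int) (c : nat) : int := t * d0 a c.
Definition c6 a1 t1 a2 t2 t6 := all (fun c => t6 * d0 6 c == Ev a1 t1 c + Ev a2 t2 c) [:: 0; 1; 2]%N.
Definition c3 a0 t0 a1 t1 a2 t2 a3 t3 := all (fun c => Ev a3 t3 c == Ev a0 t0 c + Ev a1 t1 c + Ev a2 t2 c) [:: 0; 1; 2]%N.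
Definition c4 a0 t0 a1 t1 a4 t4 := all (fun c => Ev a4 t4 c == Ev a0 t0 c + Ev a1 t1 c) [:: 0; 1; 2]%N.
Definition c5 a0 t0 a2 t2 a5 t5 := all (fun c => Ev a5 t5 c == Ev a0 t0 c + Ev a2 t2 c) [:: 0; 1; 2]%N.
Definition AS := iota 0 6.
Definition TS : seq int := [:: 1; -1].
Definition sols : seq (seq nat * seq int) := [::
 ([:: 0;1;2;3;4;5]%N, [:: 1;1;1;1;1;1;1]);
 ([:: 0;1;2;3;4;5]%N, [:: -1;-1;-1;-1;-1;-1;-1]);
 ([:: 0;2;1;3;5;4]%N, [:: 1;1;1;1;1;1;1]);
 ([:: 0;2;1;3;5;4]%N, [:: -1;-1;-1;-1;-1;-1;-1]);
 ([:: 1;0;3;2;4;5]%N, [:: 1;1;-1;-1;1;-1;-1]);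
 ([:: 1;0;3;2;4;5]%N, [:: -1;-1;1;1;-1;1;1]);
 ([:: 1;3;0;2;5;4]%N, [:: 1;-1;1;-1;-1;1;-1]);
 ([:: 1;3;0;2;5;4]%N, [:: -1;1;-1;1;1;-1;1]);
 ([:: 2;0;3;1;5;4]%N, [:: 1;1;-1;-1;1;-1;-1]);
 ([:: 2;0;3;1;5;4]%N, [:: -1;-1;1;1;-1;1;1]);
 ([:: 2;3;0;1;4;5]%N, [:: 1;-1;1;-1;-1;1;-1]);
 ([:: 2;3;0;1;4;5]%N, [:: -1;1;-1;1;1;-1;1]);
 ([:: 3;1;2;0;5;4]%N, [:: 1;-1;-1;1;1;1;-1]);
 ([:: 3;1;2;0;5;4]%N, [:: -1;1;1;-1;-1;-1;1]);
 ([:: 3;2;1;0;4;5]%N, [:: 1;-1;-1;1;1;1;-1]);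
 ([:: 3;2;1;0;4;5]%N, [:: -1;1;1;-1;-1;-1;1])].

Definition check : bool :=
 all (fun a1 => all (fun t1 => all (fun a2 => all (fun t2 => all (fun t6 =>
 if c6 a1 t1 a2 t2 t6 then all (fun a0 => all (fun t0 => all (fun a3 => all (fun t3 =>
 if c3 a0 t0 a1 t1 a2 t2 a3 t3 then all (fun a4 => all (fun t4 =>
 if c4 a0 t0 a1 t1 a4 t4 then all (fun a5 => all (fun t5 =>
 if c5 a0 t0 a2 t2 a5 t5 then (if uniq [:: a0; a1; a2; a3; a4; a5] then
   (([:: a0; a1; a2; a3; a4; a5], [:: t0; t1; t2; t3; t4; t5; t6]) \in sols) else true) else true)
 TS) AS else true) TS) AS else true) TS) AS) TS) AS else true) TS) TS) AS) TS) AS.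
Lemma check_ok : check. Proof. vm_compute. reflexivity. Qed.

Lemma words l a0 a1 a2 a3 a4 a5 t0 t1 t2 t3 t4 t5 t6 :
  ([:: a0; a1; a2; a3; a4; a5], [:: t0; t1; t2; t3; t4; t5; t6]) \in sols ->
  exists W : 'M[int]_(6 + l), in_gen_group W /\ forall i k : 'I_(6 + l),
  W i k = if (k : nat) == hrf a0 a1 a2 a3 a4 a5 i then erf t0 t1 t2 t3 t4 t5 t6 i else 0.
Proof.
rewrite /sols !inE => H.
case/orP: H => [/eqP [-> -> -> -> -> -> -> -> -> -> -> -> ->] | H].
  exists 1%:M; split; first by repeat (apply: gen_mul; first by rewrite /is_generator; do ?[by left | right]); exact: gen_one.
  by rewrite ?negone ?spmx_one /g1 /g2 /g3 ?spmx_mul; try side; critt.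
case/orP: H => [/eqP [-> -> -> -> -> -> -> -> -> -> -> -> ->] | H].
  exists ((- 1%:M) *m 1%:M); split; first by repeat (apply: gen_mul; first by rewrite /is_generator; do ?[by left | right]); exact: gen_one.
  by rewrite ?negone ?spmx_one /g1 /g2 /g3 ?spmx_mul; try side; critt.
case/orP: H => [/eqP [-> -> -> -> -> -> -> -> -> -> -> -> ->] | H].
  exists (g1 l *m 1%:M); split; first by repeat (apply: gen_mul; first by rewrite /is_generator; do ?[by left | right]); exact: gen_one.
  by rewrite ?negone ?spmx_one /g1 /g2 /g3 ?spmx_mul; try side; critt.
case/orP: H => [/eqP [-> -> -> -> -> -> -> -> -> -> -> -> ->] | H].
  exists (g1 l *m ((- 1%:M) *m 1%:M)); split; first by repeat (apply: gen_mul; first by rewrite /is_generator; do ?[by left | right]); exact: gen_one.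
  by rewrite ?negone ?spmx_one /g1 /g2 /g3 ?spmx_mul; try side; critt.
case/orP: H => [/eqP [-> -> -> -> -> -> -> -> -> -> -> -> ->] | H].
  exists (g3 l *m (g2 l *m ((- 1%:M) *m 1%:M))); split; first by repeat (apply: gen_mul; first by rewrite /is_generator; do ?[by left | right]); exact: gen_one.
  by rewrite ?negone ?spmx_one /g1 /g2 /g3 ?spmx_mul; try side; critt.
case/orP: H => [/eqP [-> -> -> -> -> -> -> -> -> -> -> -> ->] | H].
  exists (g3 l *m (g2 l *m 1%:M)); split; first by repeat (apply: gen_mul; first by rewrite /is_generator; do ?[by left | right]); exact: gen_one.
  by rewrite ?negone ?spmx_one /g1 /g2 /g3 ?spmx_mul; try side; critt.
case/orP: H => [/eqP [-> -> -> -> -> -> -> -> -> -> -> -> ->] | H].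
  exists (g3 l *m (g1 l *m ((- 1%:M) *m 1%:M))); split; first by repeat (apply: gen_mul; first by rewrite /is_generator; do ?[by left | right]); exact: gen_one.
  by rewrite ?negone ?spmx_one /g1 /g2 /g3 ?spmx_mul; try side; critt.
case/orP: H => [/eqP [-> -> -> -> -> -> -> -> -> -> -> -> ->] | H].
  exists (g3 l *m (g1 l *m 1%:M)); split; first by repeat (apply: gen_mul; first by rewrite /is_generator; do ?[by left | right]); exact: gen_one.
  by rewrite ?negone ?spmx_one /g1 /g2 /g3 ?spmx_mul; try side; critt.
case/orP: H => [/eqP [-> -> -> -> -> -> -> -> -> -> -> -> ->] | H].
  exists (g1 l *m (g3 l *m ((- 1%:M) *m 1%:M))); split; first by repeat (apply: gen_mul; first by rewrite /is_generator; do ?[by left | right]); exact: gen_one.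
  by rewrite ?negone ?spmx_one /g1 /g2 /g3 ?spmx_mul; try side; critt.
case/orP: H => [/eqP [-> -> -> -> -> -> -> -> -> -> -> -> ->] | H].
  exists (g1 l *m (g3 l *m 1%:M)); split; first by repeat (apply: gen_mul; first by rewrite /is_generator; do ?[by left | right]); exact: gen_one.
  by rewrite ?negone ?spmx_one /g1 /g2 /g3 ?spmx_mul; try side; critt.
case/orP: H => [/eqP [-> -> -> -> -> -> -> -> -> -> -> -> ->] | H].
  exists (g3 l *m ((- 1%:M) *m 1%:M)); split; first by repeat (apply: gen_mul; first by rewrite /is_generator; do ?[by left | right]); exact: gen_one.
  by rewrite ?negone ?spmx_one /g1 /g2 /g3 ?spmx_mul; try side; critt.
case/orP: H => [/eqP [-> -> -> -> -> -> -> -> -> -> -> -> ->] | H].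
  exists (g3 l *m 1%:M); split; first by repeat (apply: gen_mul; first by rewrite /is_generator; do ?[by left | right]); exact: gen_one.
  by rewrite ?negone ?spmx_one /g1 /g2 /g3 ?spmx_mul; try side; critt.
case/orP: H => [/eqP [-> -> -> -> -> -> -> -> -> -> -> -> ->] | H].
  exists (g2 l *m (g1 l *m ((- 1%:M) *m 1%:M))); split; first by repeat (apply: gen_mul; first by rewrite /is_generator; do ?[by left | right]); exact: gen_one.
  by rewrite ?negone ?spmx_one /g1 /g2 /g3 ?spmx_mul; try side; critt.
case/orP: H => [/eqP [-> -> -> -> -> -> -> -> -> -> -> -> ->] | H].
  exists (g2 l *m (g1 l *m 1%:M)); split; first by repeat (apply: gen_mul; first by rewrite /is_generator; do ?[by left | right]); exact: gen_one.
  by rewrite ?negone ?spmx_one /g1 /g2 /g3 ?spmx_mul; try side; critt.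
case/orP: H => [/eqP [-> -> -> -> -> -> -> -> -> -> -> -> ->] | H].
  exists (g2 l *m ((- 1%:M) *m 1%:M)); split; first by repeat (apply: gen_mul; first by rewrite /is_generator; do ?[by left | right]); exact: gen_one.
  by rewrite ?negone ?spmx_one /g1 /g2 /g3 ?spmx_mul; try side; critt.
move/eqP: H => [-> -> -> -> -> -> -> -> -> -> -> -> ->].
  exists (g2 l *m 1%:M); split; first by repeat (apply: gen_mul; first by rewrite /is_generator; do ?[by left | right]); exact: gen_one.
  by rewrite ?negone ?spmx_one /g1 /g2 /g3 ?spmx_mul; try side; critt.
Qed.

Lemma rowunit N (Q : 'M[int]_N) : Q *m Q^T = 1%:M -> forall i, exists j,
  (Q i j = 1 \/ Q i j = -1) /\ (forall j', j' != j -> Q i j' = 0).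
Proof.
move=> H i.
have Hs : \sum_j Q i j ^+ 2 = 1.
  have := congr1 (fun A : 'M[int]_N => A i i) H; rewrite !mxE eqxx mulr1n => <-.
  by apply: eq_bigr => j _; rewrite mxE expr2.
case: (pickP (fun j => Q i j != 0)) => [j Hj | H0]; last first.
  rewrite big1 in Hs => [//|j _].
  by move/negbFE/eqP: (H0 j) => ->; rewrite expr2 mulr0.
exists j.
rewrite (bigD1 j) //= in Hs.
set r := \sum_(j' | j' != j) _ in Hs.
have r0 : 0 <= r by apply: sumr_ge0 => k _; apply: sqr_ge0.
have q1 : 1 <= Q i j ^+ 2.
  move: Hj; rewrite expr2; move: (Q i j) => x hx; nia.
have [q2 rz] : Q i j ^+ 2 = 1 /\ r = 0 by split; lia.
split.
  by move/eqP: q2; rewrite sqrf_eq1 => /orP [/eqP -> | /eqP ->]; [left|right].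
move=> j' hj'.
have := psumr_eq0P (fun k _ => sqr_ge0 (Q i k)) rz hj'.
by move/eqP; rewrite sqrf_eq0 => /eqP.
Qed.


Lemma d0_tail a : (6 <= a)%N -> forall c, d0 a c = d0 6 c.
Proof. by move=> h; do 6 (case: a h => [|a] h //); case. Qed.

Lemma d0_clamp a c : d0 a c = d0 (minn a 6) c.
Proof.
case: (boolP (6 <= a)%N) => h.
  have e : minn a 6 = 6%N by lia.
  by rewrite e (d0_tail h).
have e : minn a 6 = a by lia.
by rewrite e.
Qed.

Definition sepcheck := all (fun a => all (fun b => all (fun ta : int => all (fun tb : int =>
  if a != b then ~~ [&& ta * d0 a 0 == tb * d0 b 0, ta * d0 a 1 == tb * d0 b 1 &
     ta * d0 a 2 == tb * d0 b 2] else true) TS) TS) (iota 0 7)) (iota 0 7).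
Lemma sepcheck_ok : sepcheck. Proof. vm_compute. reflexivity. Qed.

Lemma d0sep a b (ta tb : int) : a != b -> ta \in TS -> tb \in TS ->
  ta * d0 a 0 = tb * d0 b 0 -> ta * d0 a 1 = tb * d0 b 1 -> ta * d0 a 2 = tb * d0 b 2 ->
  [/\ (6 <= a)%N, (6 <= b)%N & ta = tb].
Proof.
move=> hab hta htb e0 e1 e2.
case: (leqP 6 a) => ha; case: (leqP 6 b) => hb.
- split => //; move: e1; rewrite (d0_tail ha) (d0_tail hb).
  by have -> : d0 6 1 = 1 by []; rewrite !mulr1.
all: exfalso; have := sepcheck_ok; rewrite /sepcheck.
all: have hab' : minn a 6 != minn b 6 by apply/eqP; move/eqP: hab; lia.
all: move/allP/(_ (minn a 6)); rewrite mem_iota => /(_ ltac:(lia)).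
all: move/allP/(_ (minn b 6)); rewrite mem_iota => /(_ ltac:(lia)).
all: move/allP/(_ ta hta)/allP/(_ tb htb).
all: by rewrite hab' -!d0_clamp e0 e1 e2 !eqxx.
Qed.

Lemma inj_tail N (g : 'I_N -> 'I_N) (k : nat) : injective g ->
  (forall i : 'I_N, (k <= i)%N -> (k <= g i)%N) -> forall i : 'I_N, (i < k)%N -> (g i < k)%N.
Proof.
move=> ginj gt.
set T := [set i : 'I_N | (k <= i)%N].
have sub : g @: T \subset T.
  by apply/subsetP => x /imsetP [y]; rewrite !inE => hy ->; exact: gt.
have eq : g @: T = T by apply/eqP; rewrite eqEcard sub card_imset // leqnn.
move=> i hi; rewrite ltnNge; apply/negP => hgi.
have : g i \in g @: T by rewrite eq inE.
case/imsetP => i' hi' /ginj e.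
by move: hi'; rewrite inE -e leqNgt hi.
Qed.

Lemma fin16 a0 a1 a2 a3 a4 a5 t0 t1 t2 t3 t4 t5 t6 :
  (a0 < 6)%N -> (a1 < 6)%N -> (a2 < 6)%N -> (a3 < 6)%N -> (a4 < 6)%N -> (a5 < 6)%N ->
  t0 \in TS -> t1 \in TS -> t2 \in TS -> t3 \in TS -> t4 \in TS -> t5 \in TS -> t6 \in TS ->
  c6 a1 t1 a2 t2 t6 -> c3 a0 t0 a1 t1 a2 t2 a3 t3 -> c4 a0 t0 a1 t1 a4 t4 -> c5 a0 t0 a2 t2 a5 t5 ->
  uniq [:: a0; a1; a2; a3; a4; a5] ->
  ([:: a0; a1; a2; a3; a4; a5], [:: t0; t1; t2; t3; t4; t5; t6]) \in sols.
Proof.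
have mA a : (a < 6)%N -> a \in AS by rewrite mem_iota.
move=> h0 h1 h2 h3 h4 h5 T0 T1 T2 T3 T4 T5 T6 C6 C3 C4 C5 U.
have := check_ok; rewrite /check.
move/allP/(_ a1 (mA _ h1))/allP/(_ t1 T1)/allP/(_ a2 (mA _ h2))/allP/(_ t2 T2)/allP/(_ t6 T6).
rewrite C6.
move/allP/(_ a0 (mA _ h0))/allP/(_ t0 T0)/allP/(_ a3 (mA _ h3))/allP/(_ t3 T3).
rewrite C3.
move/allP/(_ a4 (mA _ h4))/allP/(_ t4 T4); rewrite C4.
move/allP/(_ a5 (mA _ h5))/allP/(_ t5 T5); rewrite C5.
by rewrite U.
Qed.

Lemma pmxE N (s : 'S_N) a b : (perm_mx s a b : int) = if s a == b then 1 else 0.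
Proof. by rewrite !mxE; case: (_ == _). Qed.

Lemma final l (M W : 'M[int]_(6 + l)) (g : 'I_(6 + l) -> 'I_(6 + l)) (t : 'I_(6 + l) -> int)
  (hr : nat -> nat) (er : nat -> int) :
  injective g -> (forall i : 'I_(6 + l), (6 <= i)%N -> (6 <= g i)%N) ->
  (forall i : 'I_(6 + l), (i < 6)%N -> (g i < 6)%N) ->
  (forall i j, M i j = if j == g i then t i else 0) ->
  (forall i : 'I_(6 + l), hr i = if (i < 6)%N then val (g i) else val i) ->
  (forall i : 'I_(6 + l), er i = t i) ->
  in_gen_group W -> (forall i k : 'I_(6 + l), W i k = if (k : nat) == hr i then er i else 0) ->
  in_allowed_group M.
Proof.
move=> ginj gt gs Mr hrE erE HW Wr.
pose tf := fun k : 'I_(6 + l) => if (k < 6)%N then k else g k.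
have tinj : injective tf.
  move=> x y; rewrite /tf; case: ifP => hx; case: ifP => hy //.
  - move=> e; have := gt y; rewrite -e; move/negbT: hy; rewrite -leqNgt => hy /(_ hy); lia.
  - move=> e; have := gt x; rewrite e; move/negbT: hx; rewrite -leqNgt => hx /(_ hx); lia.
  - exact: ginj.
exists W, (perm tinj); split => //; split.
  by move=> i hi; rewrite permE /tf hi.
apply/matrixP => i j; rewrite [RHS]mxE; under eq_bigr do rewrite pmxE.
pose k0 := if (i < 6)%N then g i else i.
rewrite (bigD1 k0) //= big1 ?addr0.
  rewrite Wr permE /tf /k0 hrE erE Mr.
  case: (ltnP i 6) => hi /=; rewrite ?eqxx ?(gs i hi) /=;
    try (have -> : (i < 6)%N = false by rewrite ltnNge hi);
  (case: eqP => [->|ne]; first by rewrite eqxx /= ?mulr1);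
  have -> : (g i == j) = false by apply/eqP => e; apply: ne; rewrite e.
  1,2: by rewrite mulr0.
move=> k hk; rewrite Wr hrE.
have -> : ((k : nat) == (if (i < 6)%N then val (g i) else val i)) = false.
  apply/negbTE; apply: contra hk => /eqP e; apply/eqP/val_inj => /=; rewrite e /k0; by case: ifP.
by rewrite mul0r.
Qed.

Lemma main l (hl : (2 <= l)%N) (M : 'M[int]_(6 + l)) :
  M^T *m M = 1%:M -> maps_L_onto_L M -> in_allowed_group M.
Proof.
move=> MtM [HL _].
have MMt : M *m M^T = 1%:M := mulmx1C MtM.
have [g Hg] := fin_all_exists (rowunit MMt).
have MtMt : M^T *m M^T^T = 1%:M by rewrite trmxK.
have Hc := rowunit MtMt.
pose t i := M i (g i).
have tpm i : t i = 1 \/ t i = -1 := (Hg i).1.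
have Mr i j : M i j = if j == g i then t i else 0.
  by case: eqP => [->//|/eqP ne]; exact: (Hg i).2 j ne.
have tnz i : t i != 0 by case: (tpm i) => ->.
have ginj : injective g.
  move=> i i' e. have [i0 [_ Hz]] := Hc (g i).
  have P x : M x (g i) != 0 -> x = i0.
    move=> h; apply/eqP; case: (x =P i0) => // /eqP ne.
    by move: (Hz x ne); rewrite mxE => e0; rewrite e0 eqxx in h.
  by rewrite (P i (tnz i)) (P i') // e; exact: tnz.
have EQ (c : 'I_3) : exists x0 x1 x2 : int, forall i : 'I_(6 + l),
    t i * d0 (g i) c = d0 i 0 * x0 + d0 i 1 * x1 + d0 i 2 * x2.
  have [x hx] := HL (col c (D0 l)) (ex_intro _ (delta_mx c 0) (colE c _)).
  exists (x ord0 0), (x (lift ord0 ord0) 0), (x (lift ord0 (lift ord0 ord0)) 0) => i.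
  have := congr1 (fun A : 'cV[int]_(6 + l) => A i 0) hx; rewrite !mxE => h.
  rewrite (bigD1 (g i)) //= big1 ?addr0 in h; last first.
    by move=> j hj; rewrite Mr (negbTE hj) mul0r.
  rewrite !big_ord_recl big_ord0 addr0 !mxE /= in h.
  rewrite /bump /= in h. by rewrite /t h addrA.
have hk k : (k < 8)%N -> (k < 6 + l)%N by move=> h; lia.
pose o0 : 'I_(6 + l) := Ordinal (hk 0%N isT).
pose o1 : 'I_(6 + l) := Ordinal (hk 1%N isT).
pose o2 : 'I_(6 + l) := Ordinal (hk 2%N isT).
pose o3 : 'I_(6 + l) := Ordinal (hk 3%N isT).
pose o4 : 'I_(6 + l) := Ordinal (hk 4%N isT).
pose o5 : 'I_(6 + l) := Ordinal (hk 5%N isT).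
pose o6 : 'I_(6 + l) := Ordinal (hk 6%N isT).
pose o7 : 'I_(6 + l) := Ordinal (hk 7%N isT).
pose c0 : 'I_3 := @Ordinal 3 0 isT.
pose c1 : 'I_3 := @Ordinal 3 1 isT.
pose c2 : 'I_3 := @Ordinal 3 2 isT.
have Tc (c : 'I_3) (i j : 'I_(6 + l)) : (6 <= i)%N -> (6 <= j)%N ->
    t i * d0 (g i) c = t j * d0 (g j) c.
  move=> hi hj; have [x0 [x1 [x2 E]]] := EQ c.
  by rewrite !E !(d0_tail hi) !(d0_tail hj).
have TS_t (i : 'I_(6 + l)) : t i \in TS by case: (tpm i) => ->; rewrite !inE eqxx ?orbT.
have pair (i j : 'I_(6 + l)) : (6 <= i)%N -> (6 <= j)%N -> i != j -> (6 <= g i)%N /\ t i = t j.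
  move=> hi hj nij; have ng : val (g i) != val (g j).
    by apply: contra nij => /eqP/val_inj/ginj ->.
  by have [? _ ?] := d0sep ng (TS_t i) (TS_t j) (Tc c0 i j hi hj) (Tc c1 i j hi hj) (Tc c2 i j hi hj).
have tail (i : 'I_(6 + l)) : (6 <= i)%N -> (6 <= g i)%N /\ t i = t o6.
  move=> hi; case: (i =P o6) => [->|/eqP ne].
    by have [h _] := pair o6 o7 isT isT isT.
  exact: pair i o6 hi isT ne.
have gt (i : 'I_(6 + l)) : (6 <= i)%N -> (6 <= g i)%N := fun h => (tail i h).1.
have gs := inj_tail ginj gt.
have [y0 [y1 [y2 F0]]] := EQ c0.
have [z0 [z1 [z2 F1]]] := EQ c1.
have [w0 [w1 [w2 F2]]] := EQ c2.
have g6 := gt o6 isT.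
move: (F0 o0) (F0 o1) (F0 o2) (F0 o3) (F0 o4) (F0 o5) (F0 o6)
      (F1 o0) (F1 o1) (F1 o2) (F1 o3) (F1 o4) (F1 o5) (F1 o6)
      (F2 o0) (F2 o1) (F2 o2) (F2 o3) (F2 o4) (F2 o5) (F2 o6).
rewrite !(d0_tail g6) /= => e00 e01 e02 e03 e04 e05 e06 e10 e11 e12 e13 e14 e15 e16 e20 e21 e22 e23 e24 e25 e26.
have C6 : c6 (g o1) (t o1) (g o2) (t o2) (t o6).
  rewrite /c6 /Ev /= !andbT; repeat (apply/andP; split); apply/eqP; lia.
have C3 : c3 (g o0) (t o0) (g o1) (t o1) (g o2) (t o2) (g o3) (t o3).
  rewrite /c3 /Ev /= !andbT; repeat (apply/andP; split); apply/eqP; lia.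
have C4 : c4 (g o0) (t o0) (g o1) (t o1) (g o4) (t o4).
  rewrite /c4 /Ev /= !andbT; repeat (apply/andP; split); apply/eqP; lia.
have C5 : c5 (g o0) (t o0) (g o2) (t o2) (g o5) (t o5).
  rewrite /c5 /Ev /= !andbT; repeat (apply/andP; split); apply/eqP; lia.
have U : uniq [:: val (g o0); val (g o1); val (g o2); val (g o3); val (g o4); val (g o5)].
  have -> : [:: val (g o0); val (g o1); val (g o2); val (g o3); val (g o4); val (g o5)] =
    map (fun i => val (g i)) [:: o0; o1; o2; o3; o4; o5] by [].
  rewrite (map_inj_uniq (inj_comp val_inj ginj)).
  by [].
have mem := fin16 (gs o0 isT) (gs o1 isT) (gs o2 isT) (gs o3 isT) (gs o4 isT) (gs o5 isT)
  (TS_t o0) (TS_t o1) (TS_t o2) (TS_t o3) (TS_t o4) (TS_t o5) (TS_t o6) C6 C3 C4 C5 U.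
have [W [HW Wr]] := words l mem.
apply: (final ginj gt gs Mr _ _ HW Wr).
  move=> [[|[|[|[|[|[|m]]]]]] hm] /=; (by congr (nat_of_ord (g _)); apply: val_inj) || done.
move=> [[|[|[|[|[|[|m]]]]]] hm] /=; try by congr (t _); apply: val_inj.
by rewrite (tail (Ordinal hm) isT).2.
Qed.

Theorem proposition5p1 (n : nat) (hn : (4 <= n)%N)
  (M : 'M[int]_(6 + (2 ^ (n - 2) - 1))) :
  M^T *m M = 1%:M ->
  maps_L_onto_L M ->
  in_allowed_group M.
Proof.
apply: main.
have e : (n - 2 = (n - 4) + 2)%N by lia.
rewrite e expnD.
have : (0 < 2 ^ (n - 4))%N by rewrite expn_gt0.
lia.
Qed.
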